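(* Let $\mathbf{F}_\Phi$ be a two-sided Scissorhand fence over the Cantor space $X$, let $H_X:X\to X$ be a continuous surjection, and let $T:\mathbf{F}_\Phi\to\mathbf{F}_\Phi$ be a continuous lifting of $H_X$. Then: (1) if $H_X$ is transitive, then $T$ is transitive; (2) if $H_X$ is minimal, then $T$ is minimal; (3) if $T$ is a homeomorphism and $H_X$ is chaotic, then $T$ is chaotic.
   Context: For $\Phi=(\varphi^L,\varphi^U)$ with $\varphi^L,\varphi^U:X\to[0,1]$, $\varphi^L$ lower semicontinuous, $\varphi^U$ upper semicontinuous, $\varphi^L\le\varphi^U$, the fence is $\mathbf{F}_\Phi=\{(x,t)\in X\times[0,1]:\varphi^L(x)\le t\le\varphi^U(x)\}$ and $\mathbf{F}_\Phi(x)=\{t:(x,t)\in\mathbf{F}_\Phi\}$. It is a two-sided Scissorhand fence if both graphs $\{(x,\varphi^U(x))\}$ and $\{(x,\varphi^L(x))\}$ are dense in $\mathbf{F}_\Phi$ and $\{x:\varphi^L(x)\ne\varphi^U(x)\}$ is dense in $X$. A map $T$ is a lifting of $H_X$ if $T(x,t)=(H_X(x),s)$ with $s\in\mathbf{F}_\Phi(H_X(x))$ for all $(x,t)\in\mathbf{F}_\Phi$. Transitive: there is a point with dense orbit; minimal: every orbit is dense; chaotic (Devaney): transitive with a dense set of periodic points. *)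

(* Defs.v *)
From HB Require Import structures.
From mathcomp Require Import all_boot all_order all_algebra.
From mathcomp Require Import all_classical all_reals all_analysis.
Set Implicit Arguments. Unset Strict Implicit. Unset Printing Implicit Defensive.
Import Order.TTheory GRing.Theory Num.Theory.
Import numFieldTopology.Exports.
Local Open Scope classical_set_scope.
Local Open Scope ring_scope.

Definition lsc {X : topologicalType} {R : realType} (f : X -> R) :=
  forall x (a : R), a < f x -> exists2 V, nbhs x V & forall y, V y -> a < f y.
Definition usc {X : topologicalType} {R : realType} (f : X -> R) :=
  forall x (a : R), f x < a -> exists2 V, nbhs x V & forall y, V y -> f y < a.

Definition admissible_pair {X : topologicalType} {R : realType}
  (phiL phiU : X -> R) :=
  [/\ forall x, 0 <= phiL x <= 1, forall x, 0 <= phiU x <= 1,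
      lsc phiL, usc phiU & forall x, phiL x <= phiU x].

Definition fence {X : Type} {R : realType} (phiL phiU : X -> R) : set (X * R) :=
  [set p | phiL p.1 <= p.2 <= phiU p.1].

Definition dense_in {T : topologicalType} (A B : set T) := B `<=` closure A.

Definition two_sided_scissorhand {X : topologicalType} {R : realType}
  (phiL phiU : X -> R) :=
  [/\ admissible_pair phiL phiU,
      dense_in [set (x, phiU x) | x in setT] (fence phiL phiU),
      dense_in [set (x, phiL x) | x in setT] (fence phiL phiU)
    & dense_in [set x | phiL x != phiU x] setT].

Definition lifting_of {X : Type} {R : realType} (phiL phiU : X -> R)
  (H : X -> X) (T : X * R -> X * R) :=
  forall p, fence phiL phiU p ->
    (T p).1 = H p.1 /\ fence phiL phiU (T p).

Definition orbit {T : Type} (f : T -> T) (p : T) : set T :=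
  [set iter n f p | n in setT].

Definition transitive_on {T : topologicalType} (f : T -> T) (S : set T) :=
  exists2 p, S p & dense_in (orbit f p) S.
Definition minimal_on {T : topologicalType} (f : T -> T) (S : set T) :=
  forall p, S p -> dense_in (orbit f p) S.
Definition periodic_points {T : Type} (f : T -> T) (S : set T) : set T :=
  [set p | S p /\ exists2 n : nat, (0 < n)%N & iter n f p = p].
Definition chaotic_on {T : topologicalType} (f : T -> T) (S : set T) :=
  transitive_on f S /\ dense_in (periodic_points f S) S.

Definition homeomorphism_on {T : topologicalType} (f : T -> T) (S : set T) :=
  [/\ forall p, S p -> S (f p), {within S, continuous f} &
      exists g : T -> T, [/\ forall p, S p -> S (g p), {within S, continuous g},
         forall p, S p -> g (f p) = p & forall p, S p -> f (g p) = p]].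

(* Main.v *)
Require Import Defs.
From HB Require Import structures.
From mathcomp Require Import all_boot all_order all_algebra.
From mathcomp Require Import all_classical all_reals all_analysis.
From mathcomp Require Import lra.
Import Order.TTheory GRing.Theory Num.Theory.
Import numFieldTopology.Exports.
Local Open Scope classical_set_scope.
Local Open Scope ring_scope.
Set Implicit Arguments. Unset Strict Implicit.

Lemma wcomp {U V W : topologicalType} (A : set U) (B : set V) (f : U -> V) (g : V -> W) x :
 (forall z, A z -> B (f z)) -> f @ within A (nbhs x) --> f x ->
 g @ within B (nbhs (f x)) --> g (f x) -> (g \o f) @ within A (nbhs x) --> g (f x).
Proof.
move=> AB cf cg.
have h : f @ within A (nbhs x) --> within B (nbhs (f x)).
  move=> S /= hS.
  have := cf _ hS. rewrite /within /= /prop_near1 /nbhs /=.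
  by apply: filterS => t h1 At; exact: h1 At (AB _ At).
exact: (cvg_comp _ _ h cg).
Qed.

Section S.
Context {X : topologicalType} {R : realType}.

Lemma prod_nbhsP (q : X * R) N : nbhs q N -> exists P : set X * set R, [/\ nbhs q.1 P.1, nbhs q.2 P.2 & P.1 `*` P.2 `<=` N].
Proof. case=> P [? ?] sub. by exists P. Qed.
Lemma prod_nbhsI (q : X * R) A B : nbhs q.1 A -> nbhs q.2 B -> nbhs q (A `*` B).
Proof. move=> hA hB. by exists (A, B). Qed.

Lemma key (phiL phiU : X -> R) (q : X * R) (N : set (X * R)) :
  two_sided_scissorhand phiL phiU -> fence phiL phiU q -> nbhs q N ->
  exists x2 : X, exists2 W, nbhs x2 W &
    forall z, fence phiL phiU z -> W z.1 -> N z.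
Proof.
case=> [[_ _ hL hU hLU] dU dL _] Fq [[A B] [/= hA hB] AB].
move/nbhs_ballP: hB => [e /= e0 eB].
rewrite nbhsE in hA; case: hA => A' [oA' A'q] A'A.
have := dU q Fq (A' `*` ball q.2 e).
have ballN (x : R) : `|q.2 - x| < e -> nbhs x (ball q.2 e).
  by move=> h; apply: open_nbhs_nbhs; split; [exact: ball_open | exact: h].
have ballE (x : R) : ball q.2 e x = (`|q.2 - x| < e) by [].
case.
  apply: prod_nbhsI; first exact: open_nbhs_nbhs.
  by apply: ballN; rewrite subrr normr0.
move=> [y1 t1] [[x1 _ [<- <-]]] [/= A'x1]; rewrite ballE ltr_distlC => /andP[x1a x1b].
have [U1 hU1 U1b] := hU _ _ x1b.
rewrite nbhsE in hU1; case: hU1 => U1' [oU1' U1'x1] U1'U1.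
have F1 : fence phiL phiU (x1, phiU x1) by rewrite /fence /= hLU lexx.
have := dL _ F1 ((A' `&` U1') `*` ball q.2 e).
case.
  apply: prod_nbhsI => /=; first by apply: open_nbhs_nbhs; split; [exact: openI | by split].
  by apply: ballN; rewrite ltr_distlC x1a x1b.
move=> [y2 t2] [[x2 _ [<- <-]]] [/= [A'x2 U1'x2]]; rewrite ballE ltr_distlC => /andP[x2a x2b].
have [U2 hU2 U2a] := hL _ _ x2a.
exists x2; exists ((A' `&` U1') `&` U2).
  apply: filterI => //; apply: open_nbhs_nbhs; split; [exact: openI | by split].
move=> [z s] /andP[/= zL zU] /= [[A'z U1'z] U2z].
apply: AB; split => /=; first exact: A'A.
apply: eB; rewrite ballE ltr_distlC.
have := U1b _ (U1'U1 _ U1'z); have := U2a _ U2z.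
move=> h1 h2; apply/andP; split.
  exact: (lt_le_trans h1 zL).
exact: (le_lt_trans zU h2).
Qed.

Lemma iter_lift (phiL phiU : X -> R) (H : X -> X) (T : X * R -> X * R) p :
  lifting_of phiL phiU H T -> fence phiL phiU p ->
  forall n, fence phiL phiU (iter n T p) /\ (iter n T p).1 = iter n H p.1.
Proof.
move=> hT Fp; elim=> [|n [IF I1]] //=.
have [h1 h2] := hT _ IF; split => //; by rewrite h1 I1.
Qed.

Lemma dense_orbit (phiL phiU : X -> R) (H : X -> X) (T : X * R -> X * R) p :
  two_sided_scissorhand phiL phiU -> lifting_of phiL phiU H T ->
  fence phiL phiU p -> dense_in (Defs.orbit H p.1) setT ->
  dense_in (Defs.orbit T p) (fence phiL phiU).
Proof.
move=> hS hT Fp dO q Fq N hN.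
have [x2 [W hW WN]] := key hS Fq hN.
have [y [[n _ <-] Wy]] := dO x2 I W hW.
have [IF I1] := iter_lift hT Fp n.
exists (iter n T p); split; first by exists n.
by apply: WN => //; rewrite I1.
Qed.

Lemma iter_cont (F : set (X * R)) (T : X * R -> X * R) :
  (forall p, F p -> F (T p)) -> {within F, continuous T} ->
  forall n p, F p -> iter n T @ within F (nbhs p) --> iter n T p.
Proof.
move=> FT /subspace_continuousP cT; elim=> [|n IH] p Fp.
  exact: cvg_within.
have Fi : forall z, F z -> F (iter n T z).
  by move=> z Fz; elim: n {IH} => //= n; apply: FT.
exact: (wcomp Fi (IH p Fp) (cT _ (Fi _ Fp))).
Qed.

Lemma fixpt (phiL phiU : X -> R) (H : X -> X) (T : X * R -> X * R) n x :
  (forall x, phiL x <= phiU x) -> lifting_of phiL phiU H T ->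
  {within fence phiL phiU, continuous T} -> iter n H x = x ->
  exists t, fence phiL phiU (x, t) /\ iter n T (x, t) = (x, t).
Proof.
move=> hLU hT cT hx.
set a := phiL x; set b := phiU x.
have Fx t : a <= t <= b -> fence phiL phiU (x, t) by [].
have It t : fence phiL phiU (x, t) ->
    fence phiL phiU (iter n T (x, t)) /\ (iter n T (x, t)).1 = x.
  by move=> Ft; have [? h] := iter_lift hT Ft n; split => //; rewrite h hx.
set g := fun t => (iter n T (x, t)).2.
have FT : forall p, fence phiL phiU p -> fence phiL phiU (T p).
  by move=> p /hT [].
have gc : {within `[a, b], continuous g}.
  apply/subspace_continuousP => t /= tab.
  have Ft : fence phiL phiU (x, t) by apply: Fx; move: tab; rewrite /= in_itv.
  have hpair : (fun s => (x, s)) @ within `[a, b] (nbhs t) --> (x, t).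
    move=> N /prod_nbhsP [[A B] [/= hA hB AB]].
    rewrite /= nbhs_simpl /within /=.
    apply: filterS hB => s Bs _; apply: AB; split => //.
    exact: nbhs_singleton.
  have hi := wcomp (B := fence phiL phiU) (f := fun s => (x, s))
    (g := iter n T) (x := t) _ hpair (iter_cont (n := n) FT cT Ft).
  have hsnd : forall P : X * R, (@snd X R) @ nbhs P --> P.2.
    move=> P S hS; rewrite /= nbhs_simpl.
    apply: filterS (prod_nbhsI (A := setT) (B := S) (q := P) filterT hS).
    by move=> [? ?] [].
  apply: (cvg_comp _ _ (hi _) (hsnd _)).
  move=> s; rewrite /= in_itv /=; exact: Fx.
have hab : a <= b := hLU x.
have gab t : a <= t <= b -> a <= g t <= b.
  by move=> /Fx /It [F1 E1]; rewrite /fence /= E1 in F1.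
have hc : {within `[a, b], continuous (g - id)}.
  apply: within_continuousB => //; apply: continuous_subspaceT => z.
  exact: cvg_id.
have [|c cab gc0] := IVT (v := 0) hab hc.
  have /andP[ga _] := gab a ltac:(by rewrite lexx hab).
  have /andP[_ gb] := gab b ltac:(by rewrite lexx hab).
  apply/andP; split.
    by rewrite ge_min; apply/orP; right; rewrite /= subr_le0.
  by rewrite le_max; apply/orP; left; rewrite /= subr_ge0.
move: gc0 => /= /eqP; rewrite subr_eq0 => /eqP gcc.
have Fc : fence phiL phiU (x, c) by apply: Fx; move: cab; rewrite in_itv.
exists c; split => //.
have [_ E1] := It c Fc.
by move: gcc E1; rewrite /g; case: (iter n T (x, c)) => y s /= -> ->.
Qed.
End S.

Theorem theorem3p3 (R : realType) (phiL phiU : cantor_space -> R)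
  (H : cantor_space -> cantor_space) (T : cantor_space * R -> cantor_space * R) :
  two_sided_scissorhand phiL phiU ->
  continuous H -> (forall y, exists x, H x = y) ->
  lifting_of phiL phiU H T ->
  {within fence phiL phiU, continuous T} ->
  [/\ transitive_on H setT -> transitive_on T (fence phiL phiU),
      minimal_on H setT -> minimal_on T (fence phiL phiU) &
      homeomorphism_on T (fence phiL phiU) -> chaotic_on H setT ->
        chaotic_on T (fence phiL phiU)].
Proof.
move=> hS cH surj hT cT.
have [[_ _ _ _ hLU] _ _ _] := hS.
have trans : transitive_on H setT -> transitive_on T (fence phiL phiU).
  case=> x _ dx; exists (x, phiL x); first by rewrite /fence /= lexx hLU.
  by apply: (dense_orbit hS hT) => //; rewrite /fence /= lexx hLU.
split => //.
- by move=> hm p Fp; apply: (dense_orbit hS hT) => //; exact: hm.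
- move=> _ [htr hper]; split; first exact: trans.
  move=> q Fq N hN.
  have [x2 [W hW WN]] := key hS Fq hN.
  have [y [[_ [n n0 hy]] Wy]] := hper x2 I W hW.
  have [t [Ft ht]] := fixpt hLU hT cT hy.
  exists (y, t); split; first by split => //; exists n.
  exact: WN.
Qed.
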